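(* Assume the input distribution is non-degenerate in the following sense: for every $\mathbf{w}\neq \mathbf{0}$ with $\theta(\mathbf{w},\mathbf{w}_* )<\pi$ one has $\mathbf{A}_{\mathbf{w},\mathbf{w}_*}\succ 0$, and for every $\mathbf{w}\neq\mathbf{0}$ with $\theta(\mathbf{w},\mathbf{w}_* )>0$ one has $\mathbf{A}_{\mathbf{w},-\mathbf{w}_*}\succ 0$. Let the initialization $\mathbf{w}_0$ satisfy $\ell(\mathbf{w}_0)<\ell(\mathbf{0})$, and run gradient descent $\mathbf{w}_{t+1}=\mathbf{w}_t-\eta_t\nabla\ell(\mathbf{w}_t)$ with step sizes for which $\ell(\mathbf{w}_t)$ is non-increasing. If the iterates converge to a point $\bar{\mathbf{w}}$ with $\nabla \ell(\bar{\mathbf{w}})=\mathbf{0}$, then $\bar{\mathbf{w}}=\mathbf{w}_*$. (Equivalently: every $\mathbf{w}$ with $\ell(\mathbf{w})<\ell(\mathbf{0})$ and $\nabla\ell(\mathbf{w})=\mathbf{0}$ equals $\mathbf{w}_*$.)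
   Context: One-neuron setting. $\mathbf{Z}\in\mathbb{R}^p$ is a random vector with a continuous distribution; $\sigma(x)=\max(x,0)$ (ReLU); $\mathbf{w}_*\in\mathbb{R}^p\setminus\{\mathbf{0}\}$ is a fixed unknown teacher vector. The population loss is $\ell(\mathbf{w})=\frac12\mathbb{E}[(\sigma(\mathbf{w}^\top\mathbf{Z})-\sigma(\mathbf{w}_*^\top\mathbf{Z}))^2]$. Define $\mathbf{A}_{\mathbf{w},\mathbf{w}_*}=\mathbb{E}[\mathbf{Z}\mathbf{Z}^\top\mathbb{I}\{\mathbf{w}^\top\mathbf{Z}\ge0,\mathbf{w}_*^\top\mathbf{Z}\ge0\}]$ and $\mathbf{A}_{\mathbf{w},-\mathbf{w}_*}=\mathbb{E}[\mathbf{Z}\mathbf{Z}^\top\mathbb{I}\{\mathbf{w}^\top\mathbf{Z}\ge0,\mathbf{w}_*^\top\mathbf{Z}\le0\}]$. For $\mathbf{w}\ne \mathbf{0}$ the population gradient is $\nabla\ell(\mathbf{w})=\mathbf{A}_{\mathbf{w},\mathbf{w}_*}(\mathbf{w}-\mathbf{w}_* )+\mathbf{A}_{\mathbf{w},-\mathbf{w}_*}\mathbf{w}$. $\theta(\mathbf{u},\mathbf{v})\in[0,\pi]$ denotes the angle between vectors $\mathbf{u},\mathbf{v}$. *)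

(* Defs.v *)
From HB Require Import structures.
From mathcomp Require Import all_boot all_order all_algebra.
From mathcomp Require Import all_classical all_reals all_analysis.
Set Implicit Arguments. Unset Strict Implicit. Unset Printing Implicit Defensive.
Import Order.TTheory GRing.Theory Num.Theory.
Import numFieldNormedType.Exports.
Local Open Scope classical_set_scope.
Local Open Scope ring_scope.

Section OneNeuron.
Variables (d : measure_display) (T : measurableType d) (R : realType)
  (P : probability T R) (p : nat).

Definition dotp (u v : 'rV[R]_p) : R := (u *m v^T) 0 0.
Definition vnorm (u : 'rV[R]_p) : R := Num.sqrt (dotp u u).
Definition angle (u v : 'rV[R]_p) : R := acos (dotp u v / (vnorm u * vnorm v)).

Definition posdef (A : 'M[R]_p) : Prop :=
  forall x : 'rV[R]_p, x != 0 -> 0 < (x *m A *m x^T) 0 0.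

Definition relu (x : R) : R := Num.max x 0.

Variable Z : 'I_p -> T -> R.

Definition wZ (w : 'rV[R]_p) (o : T) : R := \sum_(i < p) w 0 i * Z i o.

Definition Ereal (X : T -> R) : R := fine ('E_P[X])%E.

Definition loss (ws w : 'rV[R]_p) : R :=
  2^-1 * Ereal (fun o => (relu (wZ w o) - relu (wZ ws o)) ^+ 2).

(* A_{w,v} = E[Z Z^T 1{w^T Z >= 0, v^T Z >= 0}];
   A_{w,w*} = Amat w ws and A_{w,-w*} = Amat w (- ws) *)
Definition Amat (w v : 'rV[R]_p) : 'M[R]_p :=
  \matrix_(i, j) Ereal (fun o => Z i o * Z j o *
     (if (0 <= wZ w o) && (0 <= wZ v o) then 1 else 0)).

(* population gradient (formula from the paper, valid for w <> 0) *)
Definition grad (ws w : 'rV[R]_p) : 'rV[R]_p :=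
  (Amat w ws *m (w - ws)^T)^T + (Amat w (- ws) *m w^T)^T.

Definition box (a b : 'I_p -> R) : set ('rV[R]_p) :=
  [set x | forall i, a i <= x 0 i <= b i].
Definition lebesgue_null (N : set ('rV[R]_p)) : Prop :=
  forall e : R, 0 < e -> exists a b : nat -> 'I_p -> R,
    (forall n i, a n i <= b n i) /\
    N `<=` \bigcup_n box (a n) (b n) /\
    (forall n, \sum_(k < n) \prod_(i < p) (b k i - a k i) < e).

Definition continuous_distribution : Prop :=
  forall N : set ('rV[R]_p), lebesgue_null N ->
    P.-negligible [set o | N (\row_i Z i o)].

End OneNeuron.

(* Main.v *)
Require Import Defs.
From HB Require Import structures.
From mathcomp Require Import all_boot all_order all_algebra.
From mathcomp Require Import all_classical all_reals all_analysis.
From mathcomp Require Import measurable_realfun ring lra.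
Import Order.TTheory GRing.Theory Num.Theory.
Import numFieldNormedType.Exports.
Local Open Scope classical_set_scope.
Local Open Scope ring_scope.
Local Open Scope classical_set_scope.
Local Open Scope ring_scope.

Section H.
Context (d : measure_display) (T : measurableType d) (R : realType) (P : probability T R).

Lemma Efin (X : T -> R) : X \in Lfun P 1 -> ('E_P[X] \is a fin_num)%E.
Proof. by move=> /Lfun1_integrable h; rewrite unlock; apply: integrable_fin_num. Qed.

Lemma ErealD (X Y : T -> R) : X \in Lfun P 1 -> Y \in Lfun P 1 ->
  Ereal P (fun o => X o + Y o) = Ereal P X + Ereal P Y.
Proof.
move=> hX hY; rewrite /Ereal.
have -> : (fun o => X o + Y o) = X \+ Y by [].
by rewrite expectationD// fineD// ?Efin.
Qed.

Lemma ErealZ (X : T -> R) k : X \in Lfun P 1 ->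
  Ereal P (fun o => k * X o) = k * Ereal P X.
Proof.
move=> hX; rewrite /Ereal.
have -> : (fun o => k * X o) = k \o* X.
  by apply/funext => o /=; rewrite mulrC.
by rewrite expectationZl// fineM// Efin.
Qed.

Lemma Ereal_sum (I : Type) (s : seq I) (F : I -> T -> R) :
  (forall i, F i \in Lfun P 1) ->
  Ereal P (fun o => \sum_(i <- s) F i o) = \sum_(i <- s) Ereal P (F i).
Proof.
move=> hF; elim: s => [|a s IH].
  rewrite big_nil /Ereal.
  under eq_fun do rewrite big_nil.
  by rewrite expectation_cst.
rewrite big_cons -IH -ErealD//.
  by under eq_fun do rewrite big_cons.
have -> : (fun o => \sum_(i <- s) F i o) = \sum_(i <- s) F i.
  by apply/funext => o; rewrite fct_sumE.
by apply: rpred_sum.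
Qed.

Lemma Ereal_ge0 (X : T -> R) : (forall o, 0 <= X o) -> 0 <= Ereal P X.
Proof. by move=> h; rewrite /Ereal fine_ge0// expectation_ge0. Qed.

Variables (p : nat) (Z : 'I_p -> {RV P >-> R}).
Hypothesis HL2 : forall i, (Z i : T -> R) \in Lfun P 2%E.
Let Zf := fun i => (Z i : T -> R).

Definition ind (v1 v2 : 'rV[R]_p) (o : T) : R :=
  if (0 <= wZ Zf v1 o) && (0 <= wZ Zf v2 o) then 1 else 0.

Lemma mwZ v : measurable_fun setT (wZ Zf v).
Proof.
rewrite /wZ; apply: measurable_sum => i.
by apply: measurable_funM => //; exact: measurable_funPT.
Qed.

Lemma mind v1 v2 : measurable_fun setT (ind v1 v2).
Proof.
apply: measurable_fun_ifT => //.
by apply: measurable_and; apply: measurable_fun_ler => //; exact: mwZ.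
Qed.

Lemma hL1 v1 v2 i j : (fun o => Zf i o * Zf j o * ind v1 v2 o) \in Lfun P 1.
Proof.
apply/Lfun1_integrable.
have L := Lfun2_mul_Lfun1 (HL2 i) (HL2 j).
move/Lfun1_integrable: L => L.
apply: (le_integrable _ _ _ L) => //.
  apply/measurable_EFinP; apply: measurable_funM; last exact: mind.
  by apply: measurable_funM; exact: measurable_funPT.
move=> o _ /=; rewrite lee_fin /ind.
case: ifP => _; first by rewrite mulr1.
by rewrite mulr0 normr0.
Qed.

Lemma hL1Z v1 v2 k i j :
  (fun o => k * (Zf i o * Zf j o * ind v1 v2 o)) \in Lfun P 1.
Proof.
have -> : (fun o => k * (Zf i o * Zf j o * ind v1 v2 o)) =
  k *: (fun o => Zf i o * Zf j o * ind v1 v2 o) by [].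
by apply: rpredZ; exact: hL1.
Qed.

Lemma quad (x y v1 v2 : 'rV[R]_p) :
  (x *m Amat P Zf v1 v2 *m y^T) 0 0 =
  Ereal P (fun o => wZ Zf x o * wZ Zf y o * ind v1 v2 o).
Proof.
have E : (fun o => wZ Zf x o * wZ Zf y o * ind v1 v2 o) =
   (fun o => \sum_(j < p) \sum_(i < p)
      (x 0 i * y 0 j * (Zf i o * Zf j o * ind v1 v2 o))).
  apply/funext => o; rewrite /wZ exchange_big /= -mulrA mulr_suml.
  apply: eq_bigr => i _; rewrite mulr_suml mulr_sumr.
  apply: eq_bigr => j _; ring.
rewrite E Ereal_sum; last first.
  move=> j; rewrite -/(Zf _).
  have -> : (fun o => \sum_(i < p) x 0 i * y 0 j * (Zf i o * Zf j o * ind v1 v2 o))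
    = \sum_(i < p) ((x 0 i * y 0 j) *: (fun o => Zf i o * Zf j o * ind v1 v2 o)).
    by apply/funext => o; rewrite fct_sumE.
  by apply: rpred_sum => i _; apply: rpredZ; exact: hL1.
rewrite mxE; apply: eq_bigr => j _.
rewrite Ereal_sum; last by move=> i; exact: hL1Z.
rewrite !mxE big_distrl /=; apply: eq_bigr => i _.
rewrite ErealZ ?hL1//.
rewrite /Amat mxE /ind /Zf; ring.
Qed.


Lemma dotp_self_gt0 (v : 'rV[R]_p) : v != 0 -> 0 < dotp v v.
Proof.
move=> v0; rewrite /dotp mxE.
have ge : forall i : 'I_p, true -> 0 <= v 0 i * v^T i 0.
  by move=> i _; rewrite mxE -expr2 sqr_ge0.
rewrite lt_def sumr_ge0 // andbT; apply/eqP => s0.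
move/eqP: v0; apply; apply/matrixP => a j; rewrite !mxE (ord1 a).
have := psumr_eq0P ge s0 (i:=j) isT; rewrite mxE => /eqP; rewrite mulf_eq0 orbb.
by move/eqP.
Qed.

Lemma angle_self (v : 'rV[R]_p) : v != 0 -> angle v v = 0.
Proof.
move=> v0; have s0 := dotp_self_gt0 v v0.
rewrite /angle /vnorm -expr2 sqr_sqrtr ?ltW// divff ?gt_eqF// acos1 //.
Qed.

Lemma ind_ge0 v1 v2 o : 0 <= ind v1 v2 o.
Proof. by rewrite /ind; case: ifP. Qed.

Lemma main (ws wb : 'rV[R]_p) :
  ws != 0 ->
  (forall v : 'rV[R]_p, v != 0 -> angle v ws < pi -> posdef (Amat P Zf v ws)) ->
  (forall v : 'rV[R]_p, v != 0 -> 0 < angle v ws -> posdef (Amat P Zf v (- ws))) ->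
  grad P Zf ws wb = 0 -> wb = ws.
Proof.
move=> ws0 H1 H2 G.
apply/eqP; rewrite -subr_eq0; apply/negPn/negP => un0.
set u := wb - ws in un0.
set A1 := Amat P Zf wb ws; set A2 := Amat P Zf wb (- ws).
have key : 0 = (u *m A1 *m u^T) 0 0 + ((wb *m A2 *m wb^T) 0 0
                                      + ((- ws) *m A2 *m wb^T) 0 0).
  have := congr1 (fun M => (u *m M^T) 0 0) G.
  rewrite /= trmx0 mulmx0 [X in _ = X]mxE => <-.
  rewrite /grad linearD /= !trmxK mulmxDr !mulmxA -/u -/A1 -/A2.
  by rewrite /u [in X in _ + X]mulmxDl mulmxDl mxE [X in _ + X]mxE.
have q1 : 0 <= (u *m A1 *m u^T) 0 0.
  rewrite quad; apply: Ereal_ge0 => o.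
  by apply: mulr_ge0 (ind_ge0 _ _ _); rewrite -expr2 sqr_ge0.
have q3 : 0 <= (wb *m A2 *m wb^T) 0 0.
  rewrite quad; apply: Ereal_ge0 => o.
  by apply: mulr_ge0 (ind_ge0 _ _ _); rewrite -expr2 sqr_ge0.
have q4 : 0 <= ((- ws) *m A2 *m wb^T) 0 0.
  rewrite quad; apply: Ereal_ge0 => o.
  rewrite /ind; case: ifP => [/andP[h1 h2]|_]; last by rewrite mulr0.
  by rewrite mulr1 mulr_ge0.
have e1 : (u *m A1 *m u^T) 0 0 = 0 by lra.
have e3 : (wb *m A2 *m wb^T) 0 0 = 0 by lra.
have [wb0|wbn0] := eqVneq wb 0.
  have EA : A1 = Amat P Zf ws ws.
    rewrite /A1 wb0; apply/matrixP => i j; rewrite !mxE; congr Ereal.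
    apply/funext => o; rewrite /wZ big1 ?lexx ?andbb// => k _.
    by rewrite mxE mul0r.
  have := H1 ws ws0; rewrite angle_self// pi_gt0 => /(_ isT) /(_ u un0).
  by rewrite -EA e1 ltxx.
have [alt|age] := ltrP (angle wb ws) pi.
  by have := H1 wb wbn0 alt u un0; rewrite -/A1 e1 ltxx.
have agt : 0 < angle wb ws by apply: lt_le_trans age; exact: pi_gt0.
by have := H2 wb wbn0 agt wb wbn0; rewrite -/A2 e3 ltxx.
Qed.

End H.

Theorem theorem1 (d : measure_display) (T : measurableType d) (R : realType)
  (P : probability T R) (p : nat) (Z : 'I_p -> {RV P >-> R})
  (ws : 'rV[R]_p) (w : nat -> 'rV[R]_p) (eta : nat -> R) (wbar : 'rV[R]_p) :
  (forall i, (Z i : T -> R) \in Lfun P 2%E) ->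
  continuous_distribution P (fun i => (Z i : T -> R)) ->
  ws != 0 ->
  (forall v : 'rV[R]_p, v != 0 -> angle v ws < pi ->
     posdef (Amat P (fun i => (Z i : T -> R)) v ws)) ->
  (forall v : 'rV[R]_p, v != 0 -> 0 < angle v ws ->
     posdef (Amat P (fun i => (Z i : T -> R)) v (- ws))) ->
  loss P (fun i => (Z i : T -> R)) ws (w 0%N) < loss P (fun i => (Z i : T -> R)) ws 0 ->
  (forall t, w t.+1 = w t - eta t *: grad P (fun i => (Z i : T -> R)) ws (w t)) ->
  (forall t, loss P (fun i => (Z i : T -> R)) ws (w t.+1)
             <= loss P (fun i => (Z i : T -> R)) ws (w t)) ->
  w @ \oo --> wbar ->
  grad P (fun i => (Z i : T -> R)) ws wbar = 0 ->
  wbar = ws.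
Proof.
move=> HL2 _ ws0 H1 H2 _ _ _ _ G.
exact: (@main _ _ _ P p Z HL2 ws wbar ws0 H1 H2 G).
Qed.
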